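(* Let $\sigma$ be one of the semantics $\mathit{cf2}$, $\mathit{stg2}$, $\mathit{tfcf2}$, $\mathit{cf1.5}$, $\mathit{tfstg2}$, $\mathit{stg1.5}$. Then $\sigma(\mathcal{F})\subseteq\mathit{na}(\mathcal{F})$ for every argumentation framework $\mathcal{F}$. Consequently $\sigma$ satisfies the I-maximality criterion and the CF-reinstatement criterion.
   Context: An argumentation framework (AF) is $\mathcal{F}=(A_{\mathcal{F}},R_{\mathcal{F}})$ with $R_{\mathcal{F}}\subseteq A_{\mathcal{F}}\times A_{\mathcal{F}}$ (possibly infinite); $a\rightarrow b$ means $(a,b)\in R_{\mathcal{F}}$. $\mathcal{F}|_B=(A_{\mathcal{F}}\cap B,R_{\mathcal{F}}\cap(B\times B))$. Conflict-free: no $a,b\in S$ with $a\rightarrow b$. $\mathit{na}(\mathcal{F})$ = set of naive extensions ($\subseteq$-maximal conflict-free sets). $S^\oplus=S\cup\{x:\exists y\in S,\ y\rightarrow x\}$; stage extension: conflict-free $S$ with no conflict-free $T$ such that $S^\oplus\subsetneq T^\oplus$. $S$ defends $a$ if every attacker of $a$ is attacked by some element of $S$. I-maximality: for all $\mathcal{F}$ and $S_1,S_2\in\sigma(\mathcal{F})$, $S_1\subseteq S_2$ implies $S_1=S_2$. CF-reinstatement: for all $\mathcal{F}$ and $S\in\sigma(\mathcal{F})$, if $S$ defends $a$ and $S\cup\{a\}$ is conflict-free then $a\in S$. $\mathrm{SCC}(\mathcal{F})$, $\mathrm{SCC}(a)$: strongly connected components of the attack graph (paths possibly of length 0). $D_S(X)=\{b\in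 X:\exists a\in S\setminus X,\ a\rightarrow b\}$. $\mathit{cf2}$: $S\in\mathit{cf2}(\mathcal{F})$ iff either $|\mathrm{SCC}(\mathcal{F})|=1$ and $S$ is naive in $\mathcal{F}$, or $|\mathrm{SCC}(\mathcal{F})|\ne1$ and for each $X\in\mathrm{SCC}(\mathcal{F})$, $S\cap X\in\mathit{cf2}(\mathcal{F}|_{X\setminus D_S(X)})$, recursively; $S$ is a member only when this recursion is well-founded (no infinite chain of recursive calls) and succeeds. $\mathit{stg2}$: same with stage for naive. $\mathit{tfcf2}$/$\mathit{tfstg2}$: $C^0_S(a)=\mathrm{SCC}(a)$; $C^{\alpha+1}_S(a)$ = component of $a$ in $\mathcal{F}|_{C^\alpha_S(a)\setminus D_S(C^\alpha_S(a))}$ (empty if $a$ not there); for limit $\lambda$, $C^\lambda_S(a)$ = component of $a$ in $\mathcal{F}|_{\bigcap_{\alpha<\lambda}C^\alpha_S(a)}$; $\alpha_S(a)$ = least $\alpha$ with $a\notin C^\alpha_S(a)$ or $C^{\alpha+1}_S(a)=C^\alpha_S(a)$; $S\in\mathit{tfcf2}(\mathcal{F})$ (resp. $\mathit{tfstg2}$) iff $S$ conflict-free and for each $a$, $a\notin C^{\alpha_S(a)}_S(a)$ or $S\cap C^{\alpha_S(a)}_S(a)$ is naive (resp. stage) in $\mathcal{F}|_{C^{\alpha_S(a)}_S(a)}$. $\mathit{cf1.5}$/$\mathit{stg1.5}$: $S$ conflict-free and for each $X\in\mathrm{SCC}(\mathcal{F})$, $S\cap X$ is naive (resp. stage) in $\mathcal{F}|_{X\setminus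 D_S(X)}$. *)

(* Defs.v *)
Set Implicit Arguments.

Record AF (U : Type) : Type := mkAF {
  args : U -> Prop;
  att  : U -> U -> Prop;
  att_wf : forall a b, att a b -> args a /\ args b
}.
Arguments args {U} _ _.
Arguments att {U} _ _ _.

Section Defs.
Variable U : Type.
Implicit Types (F : AF U) (S T X B : U -> Prop).

Definition subset S T : Prop := forall x, S x -> T x.
Definition set_eq S T : Prop := subset S T /\ subset T S.

Definition restrict F B : AF U.
Proof.
  refine (@mkAF U (fun x => args F x /\ B x)
                  (fun x y => att F x y /\ B x /\ B y) _).
  intros a b [Hab [Ha Hb]]; destruct (@att_wf U F a b Hab); tauto.
Defined.

Definition conflict_free F S : Prop :=
  subset S (args F) /\ forall a b, S a -> S b -> ~ att F a b.

Definition naive F S : Prop :=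
  conflict_free F S /\ forall T, conflict_free F T -> subset S T -> subset T S.

Definition range F S : U -> Prop := fun x => S x \/ exists y, S y /\ att F y x.

Definition stage F S : Prop :=
  conflict_free F S /\
  ~ (exists T, conflict_free F T /\
        subset (range F S) (range F T) /\ ~ subset (range F T) (range F S)).

Definition defends F S a : Prop :=
  forall b, att F b a -> exists c, S c /\ att F c b.

Inductive reach F : U -> U -> Prop :=
| reach_refl x : args F x -> reach F x x
| reach_step x y z : att F x y -> reach F y z -> reach F x z.

(* SCC(a) (empty if a is not an argument) *)
Definition scc F a : U -> Prop := fun b => reach F a b /\ reach F b a.

Definition is_SCC F X : Prop :=
  exists a, args F a /\ forall b, X b <-> scc F a b.

Definition one_SCC F : Prop :=
  exists a, args F a /\ forall b, args F b -> scc F a b.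

Definition Dset F S X : U -> Prop :=
  fun b => X b /\ exists a, S a /\ ~ X a /\ att F a b.

Definition setminus X B : U -> Prop := fun x => X x /\ ~ B x.
Definition setI S X : U -> Prop := fun x => S x /\ X x.

End Defs.

Definition semantics : Type := forall U : Type, AF U -> (U -> Prop) -> Prop.

(* SCC-recursive scheme (cf2 / stg2).  Membership is the inductive (least)
   predicate: it holds exactly when the recursion tree is well-founded and
   every branch succeeds. *)
Inductive scc_rec (base : semantics) (U : Type) : AF U -> (U -> Prop) -> Prop :=
| scc_rec_one F S :
    one_SCC F -> base U F S -> scc_rec base F S
| scc_rec_split F S :
    subset S (args F) ->
    ~ one_SCC F ->
    (forall X, is_SCC F X ->
       scc_rec base (restrict F (setminus X (Dset F S X))) (setI S X)) ->
    scc_rec base F S.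

Definition cf2 : semantics := fun U => @scc_rec naive U.
Definition stg2 : semantics := fun U => @scc_rec stage U.

Definition scc15 (base : semantics) : semantics := fun U F S =>
  conflict_free F S /\
  forall X, is_SCC F X -> base U (restrict F (setminus X (Dset F S X))) (setI S X).

Definition cf15 : semantics := scc15 naive.
Definition stg15 : semantics := scc15 stage.

(* The values of the ordinal-indexed
   sequence are represented by the "tower": the least family of sets
   containing C^0 = SCC(a), closed under the successor step and under
   "component of a in the intersection of any subfamily" (limit step). *)
Section TF.
Variables (U : Type) (F : AF U) (S : U -> Prop) (a : U).

Definition tf_step (X : U -> Prop) : U -> Prop :=
  scc (restrict F (setminus X (Dset F S X))) a.

Inductive tower : (U -> Prop) -> Prop :=
| tower_base : tower (scc F a)
| tower_succ X : tower X -> tower (tf_step X)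
| tower_lim (P : (U -> Prop) -> Prop) :
    (forall X, P X -> tower X) ->
    tower (scc (restrict F (fun x => forall X, P X -> X x)) a).

(* X is the value C^{alpha_S(a)}_S(a): a stage of the sequence with
   a ∉ X or C^{alpha+1} = C^alpha (all later stages coincide with it). *)
Definition tf_final (X : U -> Prop) : Prop :=
  tower X /\ (~ X a \/ set_eq (tf_step X) X).
End TF.

Definition tf_scheme (base : semantics) : semantics := fun U F S =>
  conflict_free F S /\
  forall a, args F a -> forall X, tf_final F S a X ->
    ~ X a \/ base U (restrict F X) (setI S X).

Definition tfcf2 : semantics := tf_scheme naive.
Definition tfstg2 : semantics := tf_scheme stage.

Definition na : semantics := fun U => @naive U.

Definition I_maximality (sigma : semantics) : Prop :=
  forall U (F : AF U) S1 S2, sigma U F S1 -> sigma U F S2 ->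
    subset S1 S2 -> set_eq S1 S2.

Definition CF_reinstatement (sigma : semantics) : Prop :=
  forall U (F : AF U) S a, sigma U F S -> defends F S a ->
    conflict_free F (fun x => S x \/ x = a) -> S a.

Arguments na : clear implicits.
Arguments cf2 : clear implicits.
Arguments stg2 : clear implicits.
Arguments cf15 : clear implicits.
Arguments stg15 : clear implicits.
Arguments tfcf2 : clear implicits.
Arguments tfstg2 : clear implicits.

(* Main.v *)
Require Import Defs.
From Stdlib Require Import Classical.
Set Implicit Arguments.

Section L.
Variable U : Type.

Lemma args_restrict (F : AF U) B x : args (restrict F B) x <-> args F x /\ B x.
Proof. simpl. tauto. Qed.

Lemma att_restrict (F : AF U) B x y : att (restrict F B) x y <-> att F x y /\ B x /\ B y.
Proof. simpl. tauto. Qed.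

Lemma reach_restrict (F : AF U) B x z : reach (restrict F B) x z -> B x /\ B z.
Proof.
  induction 1 as [x Hx | x y z Hxy _ IH].
  - apply args_restrict in Hx; destruct Hx; split; assumption.
  - apply att_restrict in Hxy; destruct Hxy as [_ [Hx _]]; split; [exact Hx|apply IH].
Qed.

Lemma stage_naive (F : AF U) S : stage F S -> naive F S.
Proof.
  intros [Hcf Hst]; split; [exact Hcf|].
  intros T HT HST t Tt.
  destruct (classic (subset (range F T) (range F S))) as [Hsub|Hn].
  - destruct (Hsub t (or_introl Tt)) as [St|[s [Ss Hst']]]; [exact St|].
    exfalso; apply (proj2 HT s t (HST s Ss) Tt Hst').
  - exfalso; apply Hst; exists T; split; [exact HT|split; [|exact Hn]].
    intros x [Sx|[y [Sy Hy]]]; [left; auto|right; exists y; auto].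
Qed.

Lemma restr_max (F : AF U) B X S T t :
  naive (restrict F B) (setI S X) -> conflict_free F T -> subset S T ->
  T t -> B t -> S t.
Proof.
  intros [[Hsb _] Hmax] HT HST Tt Bt.
  assert (H : subset (fun x => T x /\ B x) (setI S X)).
  { apply Hmax.
    - split.
      + intros x [Tx Bx]; apply args_restrict; split; [apply (proj1 HT); auto|auto].
      + intros a b [Ta _] [Tb _] Hab; apply att_restrict in Hab.
        apply (proj2 HT a b Ta Tb); apply Hab.
    - intros x Hx. assert (A := Hsb x Hx). apply args_restrict in A.
      destruct Hx; split; [auto|apply A]. }
  destruct (H t (conj Tt Bt)); auto.
Qed.
Arguments restr_max {F B X S T t}.

Lemma scc_self (F : AF U) a : args F a -> scc F a a.
Proof. intro; split; constructor; auto. Qed.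

Lemma scc_naive (F : AF U) S :
  conflict_free F S ->
  (forall X, is_SCC F X -> naive (restrict F (setminus X (Dset F S X))) (setI S X)) ->
  naive F S.
Proof.
  intros Hcf H; split; [exact Hcf|].
  intros T HT HST t Tt.
  assert (At : args F t) by (apply (proj1 HT); auto).
  apply (restr_max (H (scc F t) (ex_intro _ t (conj At (fun b => iff_refl _)))) HT HST Tt).
  split; [apply scc_self; auto|].
  intros [_ [s [Ss [_ Hst]]]].
  apply (proj2 HT s t (HST s Ss) Tt Hst).
Qed.

Lemma scc_cf (F : AF U) S :
  subset S (args F) ->
  (forall X, is_SCC F X -> naive (restrict F (setminus X (Dset F S X))) (setI S X)) ->
  conflict_free F S.
Proof.
  intros HS H; split; [exact HS|].
  intros s1 s2 S1 S2 H12.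
  set (X := scc F s2).
  assert (N := H X (ex_intro _ s2 (conj (HS s2 S2) (fun b => iff_refl _)))).
  destruct N as [[Hsub Hcf] _].
  assert (X2 : setI S X s2) by (split; [auto|apply scc_self; auto]).
  assert (A2 := Hsub s2 X2). apply args_restrict in A2.
  destruct A2 as [_ [_ ND2]].
  destruct (classic (X s1)) as [X1|NX1].
  - assert (X1' : setI S X s1) by (split; auto).
    apply (Hcf s1 s2 X1' X2).
    assert (A1 := Hsub s1 X1'). apply args_restrict in A1.
    apply att_restrict; split; [auto|split; [apply A1|]].
    split; [apply X2|auto].
  - apply ND2. split; [apply X2|]. exists s1; auto.
Qed.

Lemma scc_rec_naive (base : semantics) :
  (forall U F S, base U F S -> naive F S) ->
  forall (F : AF U) S, scc_rec base F S -> naive F S.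
Proof.
  intros Hb F S H. induction H as [F S _ Hbs | F S HS _ _ IH].
  - apply (Hb _ _ _ Hbs).
  - apply scc_naive; [apply scc_cf|]; auto.
Qed.

Lemma scc15_naive (base : semantics) :
  (forall U F S, base U F S -> naive F S) ->
  forall (F : AF U) S, scc15 base F S -> naive F S.
Proof.
  intros Hb F S [Hcf H]. apply scc_naive; auto.
Qed.

Lemma tf_naive (base : semantics) :
  (forall U F S, base U F S -> naive F S) ->
  forall (F : AF U) S, tf_scheme base F S -> naive F S.
Proof.
  intros Hb F S [Hcf H]; split; [exact Hcf|].
  intros T HT HST t Tt.
  assert (At : args F t) by (apply (proj1 HT); auto).
  assert (Inv : forall X, tower F S t X -> X t).
  { induction 1 as [| X _ IH | P _ IH].
    - apply scc_self; auto.
    - apply scc_self. apply args_restrict. split; [auto|split; [auto|]].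
      intros [_ [s [Ss [_ Hst]]]]. apply (proj2 HT s t (HST s Ss) Tt Hst).
    - apply scc_self. apply args_restrict. split; auto. }
  set (I := fun x => forall X, tower F S t X -> X x).
  set (M := scc (restrict F I) t).
  assert (TM : tower F S t M) by (apply tower_lim; auto).
  assert (Mt : M t) by (apply scc_self; apply args_restrict; split; [auto|exact Inv]).
  assert (Fin : tf_final F S t M).
  { split; [exact TM|right]. split.
    - intros x [_ Hx]. apply reach_restrict in Hx. apply Hx.
    - intros x Mx. destruct Mx as [_ Hx]. apply reach_restrict in Hx.
      apply (proj1 Hx). apply tower_succ; auto. }
  destruct (H t At M Fin) as [NM|HB]; [contradiction|].
  apply (restr_max (Hb _ _ _ HB) HT HST Tt Mt).
Qed.

End L.

Theorem theorem10 (sigma : semantics)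
  (Hsigma : sigma = cf2 \/ sigma = stg2 \/ sigma = tfcf2 \/
            sigma = cf15 \/ sigma = tfstg2 \/ sigma = stg15) :
  (forall (U : Type) (F : AF U) (S : U -> Prop), sigma U F S -> na U F S) /\
  I_maximality sigma /\ CF_reinstatement sigma.
Proof.
  assert (Hn : forall (U : Type) (F : AF U) (S : U -> Prop), na U F S -> naive F S) by (intros; assumption).
  assert (Hs : forall (U : Type) (F : AF U) (S : U -> Prop), stage F S -> naive F S) by (intros; apply stage_naive; auto).
  assert (H1 : forall (U : Type) (F : AF U) (S : U -> Prop), sigma U F S -> na U F S).
  { intros U F S HS.
    destruct Hsigma as [E|[E|[E|[E|[E|E]]]]]; subst sigma.
    - apply (scc_rec_naive (base := @naive)); auto.
    - apply (scc_rec_naive (base := @stage)); auto.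
    - apply (tf_naive (base := @naive)); auto.
    - apply (scc15_naive (base := @naive)); auto.
    - apply (tf_naive (base := @stage)); auto.
    - apply (scc15_naive (base := @stage)); auto. }
  split; [exact H1|split].
  - intros U F S1 S2 H1' H2' Hsub. split; [exact Hsub|].
    destruct (H1 _ _ _ H1') as [_ Hm]. apply Hm; auto.
    destruct (H1 _ _ _ H2'); auto.
  - intros U F S a HS _ Hcf.
    destruct (H1 _ _ _ HS) as [_ Hm].
    apply (Hm _ Hcf); [intros x Sx; left; auto|right; reflexivity].
Qed.
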